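(* Let $\mathcal{G} = (\mathcal{V}, \mathcal{E})$ be a graph and $(i,j) \in \mathcal{V} \times \mathcal{V}$ a pair of nodes of $\mathcal{G}$. Then there exist a graph $\mathcal{G}' = (\mathcal{V}', \mathcal{E}')$ not isomorphic to $\mathcal{G}$ and a pair of nodes $(i',j') \in \mathcal{V}' \times \mathcal{V}'$ such that $(P_k)_{ij} = (P'_k)_{i'j'}$ for all integers $k \geq 1$, where $P_k$ and $P'_k$ are the $k$-hop random walk matrices of $\mathcal{G}$ and $\mathcal{G}'$ respectively.
   Context: Graphs are finite and undirected, and every node has positive degree so that the random walk matrix is defined. For a graph with adjacency matrix $A$ (with $A_{ij}=1$ if $i,j$ are adjacent and $0$ otherwise) and diagonal degree matrix $D$ (with $D_{ii} = \sum_j A_{ij}$), the $k$-hop random walk matrix is $P_k = (D^{-1}A)^k$; its $(i,j)$ entry is the probability that a simple random walk of length $k$ started at $i$ ends at $j$. The graphs $\mathcal{G}$ and $\mathcal{G}'$ need not have the same number of nodes. *)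

(* Defs.v *)
From mathcomp Require Import all_boot all_order all_algebra.
Set Implicit Arguments. Unset Strict Implicit. Unset Printing Implicit Defensive.
Import Order.TTheory GRing.Theory Num.Theory.
Local Open Scope ring_scope.

Definition undirected_graph (V : finType) (e : rel V) : Prop :=
  symmetric e /\ irreflexive e.

Definition no_isolated (V : finType) (e : rel V) : Prop :=
  forall x : V, exists y : V, e x y.

Definition adj_mx (V : finType) (e : rel V) : 'M[rat]_#|V| :=
  \matrix_(i, j) (e (enum_val i) (enum_val j))%:R.

Definition deg_mx (V : finType) (e : rel V) : 'M[rat]_#|V| :=
  diag_mx (\row_i (\sum_j adj_mx e i j)).

Definition rw_mx (V : finType) (e : rel V) (k : nat) : 'M[rat]_#|V| :=
  (invmx (deg_mx e) *m adj_mx e) ^+ k.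

Definition rw_prob (V : finType) (e : rel V) (k : nat) (i j : V) : rat :=
  rw_mx e k (enum_rank i) (enum_rank j).

Definition graph_iso (V V' : finType) (e : rel V) (e' : rel V') : Prop :=
  exists f : V -> V', bijective f /\ forall x y, e' (f x) (f y) = e x y.

(* Main.v *)
Require Import Defs.
From mathcomp Require Import all_boot all_order all_algebra.
Set Implicit Arguments. Unset Strict Implicit. Unset Printing Implicit Defensive.
Import Order.TTheory GRing.Theory Num.Theory.
Local Open Scope ring_scope.

Definition degv (V : finType) (e : rel V) (x : V) : rat := \sum_(z : V) (e x z)%:R.

Lemma sum_ord_V (V : finType) (F : 'I_#|V| -> rat) :
  \sum_(c : 'I_#|V|) F c = \sum_(z : V) F (enum_rank z).
Proof. exact: (reindex enum_rank (onW_bij _ (enum_rank_bij V))). Qed.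

Lemma degv_pos (V : finType) (e : rel V) x : no_isolated e -> 0 < degv e x.
Proof.
move=> ni; have [y exy] := ni x.
rewrite /degv (bigD1 y) //= exy ltr_pwDl ?ltr01 //.
by apply: sumr_ge0 => z _; rewrite ler0n.
Qed.

Lemma deg_adj (V : finType) (e : rel V) (a : 'I_#|V|) :
  (\sum_j adj_mx e a j) = degv e (enum_val a).
Proof.
rewrite sum_ord_V; apply: eq_bigr => z _; by rewrite mxE enum_rankK.
Qed.

Lemma rwM (V : finType) (e : rel V) : no_isolated e ->
  invmx (deg_mx e) *m adj_mx e =
  \matrix_(a, b) (adj_mx e a b / degv e (enum_val a)).
Proof.
move=> ni.
set M := \matrix_(a, b) _.
have DM : deg_mx e *m M = adj_mx e.
  rewrite /deg_mx mul_diag_mx; apply/matrixP => a b; rewrite !mxE deg_adj.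
  by rewrite mulrC -mulrA mulVf ?mulr1 // gt_eqF // degv_pos.
have U : deg_mx e \in unitmx.
  rewrite unitmxE /deg_mx det_diag unitfE; apply/prodf_neq0 => a _.
  by rewrite mxE deg_adj gt_eqF // degv_pos.
by rewrite -DM mulmxA mulVmx // mul1mx.
Qed.

Lemma rw_step (V : finType) (e : rel V) k x y : no_isolated e ->
  rw_prob e k.+1 x y = \sum_(z : V) ((e x z)%:R / degv e x) * rw_prob e k z y.
Proof.
move=> ni; rewrite /rw_prob /rw_mx exprS -mulmxE rwM // mxE sum_ord_V.
by apply: eq_bigr => z _; rewrite !mxE !enum_rankK.
Qed.

Lemma rw0 (V : finType) (e : rel V) x y : rw_prob e 0 x y = (x == y)%:R.
Proof.
rewrite /rw_prob /rw_mx expr0 mxE.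
by rewrite (inj_eq (bij_inj (enum_rank_bij V))).
Qed.

Definition e2 (V : finType) (e : rel V) : rel (V + bool) :=
  fun u v => match u, v with
  | inl a, inl b => e a b
  | inr a, inr b => a != b
  | _, _ => false end.

Theorem proposition2 (V : finType) (e : rel V) (i j : V) :
  undirected_graph e -> no_isolated e ->
  exists (V' : finType) (e' : rel V') (i' j' : V'),
    [/\ undirected_graph e', no_isolated e', ~ graph_iso e e' &
        forall k : nat, (1 <= k)%N -> rw_prob e k i j = rw_prob e' k i' j'].
Proof.
move=> [sy ir] ni.
have ni2 : no_isolated (e2 e).
  case=> [a|b]; first by have [y h] := ni a; exists (inl y).
  by exists (inr (~~ b)); case: b.
exists (V + bool)%type, (e2 e), (inl i), (inl j); split => //.
- split; first by case=> [a|a] [b|b] //=; rewrite ?sy // eq_sym.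
  by case=> [a|a] /=; rewrite ?ir ?eqxx.
- move=> [f [/bij_eq_card]]; rewrite card_sum card_bool => H _.
  by move: H; rewrite addn2; elim: #|V| => // n IHn [] /IHn.
- move=> k _; elim: k i => [|k IH] x; first by rewrite !rw0.
  rewrite !rw_step // big_sumType /= [X in _ + X]big1 ?addr0.
  2: by move=> b _; rewrite !mul0r.
  have -> : degv (e2 e) (inl x) = degv e x.
    by rewrite /degv big_sumType /= [X in _ + X]big1 ?addr0.
  by apply: eq_bigr => z _; rewrite IH.
Qed.
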